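(* Consider a node resource $(\tau,u)\in R^V_S$. Let $0<\varepsilon\le1$ be such that $d_{\max}(r,\tau,u)/d_S(\tau,u)\le\varepsilon$ for all $r\in\mathcal R$. Let $\Delta=\sum_{r\in\mathcal R}\big(A_{\max}(r,\tau,u)/d_{\max}(r,\tau,u)\big)^2$ and $\beta=1+\varepsilon\sqrt{2\Delta\log(|V_S|\cdot|\mathcal T|)}$. Then $\mathbb P\big(A_{\tau,u}\ge\beta\cdot d_S(\tau,u)\big)\le(|V_S|\cdot|\mathcal T|)^{-4}$.
   Context: Substrate: directed graph $G_S=(V_S,E_S)$, node types $\mathcal T$, $V_S^\tau\subseteq V_S$, node resources $R^V_S=\{(\tau,u):u\in V_S^\tau\}$, resources $R_S=R^V_S\cup E_S$, capacities $d_S(x,y)>0$. Requests $r\in\mathcal R$: directed graph $G_r=(V_r,E_r)$, types $\tau_r$, demands $d_r(i),d_r(i,j)\ge0$, allowed node sets $V_S^{r,i}\subseteq V_S^{\tau_r(i)}$, allowed edge sets $E_S^{r,i,j}\subseteq E_S$. Valid mappings $m_r$ (each node $i$ to a node of $V_S^{r,i}$, each edge $(i,j)$ to a directed path between the images within $E_S^{r,i,j}$), set $\mathcal M_r$; allocation $A(m_r,\tau,u)=\sum_{i:\tau_r(i)=\tau,m^V_r(i)=u}d_r(i)$, $A(m_r,u,v)=\sum_{(i,j):(u,v)\in m^E_r(i,j)}d_r(i,j)$; $d_{\max}(r,\tau,u)=\max_{i:u\in V_S^{r,i}}d_r(i)$; $A_{\max}(r,x,y)=\max_{m\in\mathcal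 M_r}A(m,x,y)$. Rounding setting (profit variant): for each request $r$ a finite family $\mathcal D_r=\{(f^k_r,m^k_r)\}_k$ with $f^k_r>0$, $m^k_r\in\mathcal M_r$, $\sum_kf^k_r\le1$, obtained by decomposing a feasible solution of the paper's decomposable LP relaxation of the VNEP, so that in particular $\sum_{r\in\mathcal R}\sum_kf^k_rA(m^k_r,x,y)\le d_S(x,y)$ for all $(x,y)\in R_S$. Independently for each $r$, mapping $m^k_r$ is selected with probability $f^k_r$ and no mapping with probability $1-\sum_kf^k_r$; $A_{r,x,y}$ is the allocation of the selected mapping on $(x,y)$ (0 if none) and $A_{x,y}=\sum_rA_{r,x,y}$. *)

(* Defs.v *)
From HB Require Import structures.
From mathcomp Require Import all_boot all_order all_algebra.
From mathcomp Require Import boolp reals exp.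
Set Implicit Arguments. Unset Strict Implicit. Unset Printing Implicit Defensive.
Import Order.TTheory GRing.Theory Num.Theory.
Local Open Scope ring_scope.

Record substrate (R : realType) := Substrate {
  sV : finType;
  sT : finType;
  sVt : sT -> {set sV};
  sE : rel sV;
  sdV : sT -> sV -> R;
  sdE : sV -> sV -> R
}.
Arguments sV {R} s.  Arguments sT {R} s.  Arguments sVt {R} s _.
Arguments sE {R} s _ _.  Arguments sdV {R} s _ _.  Arguments sdE {R} s _ _.

Definition wf_substrate (R : realType) (S : substrate R) : Prop :=
  (forall t u, u \in sVt S t -> 0 < sdV S t u) /\
  (forall u v, sE S u v -> 0 < sdE S u v).

Record request (R : realType) (S : substrate R) := Request {
  rV : finType;
  rE : rel rV;
  rtau : rV -> sT S;
  rdV : rV -> R;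
  rdE : rV -> rV -> R;
  rVallow : rV -> {set sV S};
  rEallow : rV -> rV -> rel (sV S)
}.
Arguments rV {R S} r.  Arguments rE {R S} r _ _.  Arguments rtau {R S} r _.
Arguments rdV {R S} r _.  Arguments rdE {R S} r _ _.
Arguments rVallow {R S} r _.  Arguments rEallow {R S} r _ _ _ _.

Definition wf_request (R : realType) (S : substrate R) (q : request S) : Prop :=
  (forall i, 0 <= rdV q i) /\
  (forall i j, rE q i j -> 0 <= rdE q i j) /\
  (forall i, rVallow q i \subset sVt S (rtau q i)) /\
  (forall i j x y, rE q i j -> rEallow q i j x y -> sE S x y).

(* An edge (i,j) is mapped to a directed path, given as the sequence of nodes
   visited after the start node m^V(i); its edges are zip (m^V(i) :: p) p. *)
Record mapping (R : realType) (S : substrate R) (q : request S) := Mapping {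
  mV : {ffun rV q -> sV S};
  mE : rV q -> rV q -> seq (sV S)
}.
Arguments Mapping {R S q} _ _.
Arguments mV {R S q} m.  Arguments mE {R S q} m _ _.

Definition path_edges (T : Type) (s : T) (p : seq T) : seq (T * T) :=
  zip (s :: p) p.

Definition valid_mapping (R : realType) (S : substrate R) (q : request S)
  (m : mapping q) : Prop :=
  (forall i, mV m i \in rVallow q i) /\
  (forall i j, rE q i j ->
     path (rEallow q i j) (mV m i) (mE m i j) /\ last (mV m i) (mE m i j) = mV m j).

Definition Anode (R : realType) (S : substrate R) (q : request S)
  (mv : {ffun rV q -> sV S}) (t : sT S) (u : sV S) : R :=
  \sum_(i | (rtau q i == t) && (mv i == u)) rdV q i.

Definition Aedge (R : realType) (S : substrate R) (q : request S)
  (m : mapping q) (u v : sV S) : R :=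
  \sum_(ij : rV q * rV q | rE q ij.1 ij.2 &&
        ((u, v) \in path_edges (mV m ij.1) (mE m ij.1 ij.2))) rdE q ij.1 ij.2.

Definition dmax (R : realType) (S : substrate R) (q : request S) (u : sV S) : R :=
  \big[Num.max/0]_(i | u \in rVallow q i) rdV q i.

(* A_max(r, tau, u) = max over valid mappings m of A(m,tau,u); since A(m,tau,u)
   only depends on the node part of m, the max ranges over node maps that
   extend to a valid mapping (0 if there is no valid mapping). *)
Definition Amax (R : realType) (S : substrate R) (q : request S)
  (t : sT S) (u : sV S) : R :=
  \big[Num.max/0]_(mv : {ffun rV q -> sV S} |
                   `[< exists me, valid_mapping (Mapping mv me) >]) Anode mv t u.

Definition rounding_family (R : realType) (S : substrate R) (Req : finType)
  (req : Req -> request S) (K : Req -> nat)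
  (f : forall r, 'I_(K r) -> R) (m : forall r, 'I_(K r) -> mapping (req r)) : Prop :=
  (forall r k, 0 < f r k) /\
  (forall r k, valid_mapping (m r k)) /\
  (forall r, \sum_(k < K r) f r k <= 1) /\
  (forall t u, u \in sVt S t ->
     \sum_r \sum_(k < K r) f r k * Anode (mV (m r k)) t u <= sdV S t u) /\
  (forall u v, sE S u v ->
     \sum_r \sum_(k < K r) f r k * Aedge (m r k) u v <= sdE S u v).

(* Outcome: for each request, Some k (mapping m_r^k selected) or None. *)
Definition outcome (Req : finType) (K : Req -> nat) : finType :=
  {dffun forall r : Req, option 'I_(K r)}.

Definition sel_prob (R : realType) (Req : finType) (K : Req -> nat)
  (f : forall r, 'I_(K r) -> R) (r : Req) (o : option 'I_(K r)) : R :=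
  match o with
  | Some k => f r k
  | None => 1 - \sum_(k < K r) f r k
  end.

Definition weight (R : realType) (Req : finType) (K : Req -> nat)
  (f : forall r, 'I_(K r) -> R) (w : outcome K) : R :=
  \prod_(r : Req) sel_prob f (w r).

Definition Prob (R : realType) (Req : finType) (K : Req -> nat)
  (f : forall r, 'I_(K r) -> R) (E : pred (outcome K)) : R :=
  \sum_(w : outcome K | E w) weight f w.

Definition Aalloc (R : realType) (S : substrate R) (Req : finType)
  (req : Req -> request S) (K : Req -> nat)
  (m : forall r, 'I_(K r) -> mapping (req r)) (t : sT S) (u : sV S)
  (w : outcome K) : R :=
  \sum_(r : Req) match w r with
                 | Some k => Anode (mV (m r k)) t u
                 | None => 0
                 end.

Arguments rounding_family {R S Req} req K f m.
Arguments Prob {R Req} K f E.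
Arguments Aalloc {R S Req req K} m t u w.
Arguments dmax {R S} q u.
Arguments Amax {R S} q t u.

(* Main.v *)
Require Import Defs.
From HB Require Import structures.
From mathcomp Require Import all_boot all_order all_algebra.
From mathcomp Require Import boolp classical_sets functions reals interval_inference topology normedtype sequences derive exp convex.
From mathcomp Require Import ring lra.
Import Order.TTheory GRing.Theory Num.Theory.
Import numFieldNormedType.Exports.
Local Open Scope ring_scope.

Section Ana.
Variable R : realType.

Lemma is_derive_chain (f g : R -> R) (x df dg : R) :
  is_derive x 1 f df -> is_derive (f x) 1 g dg -> is_derive x 1 (g \o f) (dg * df).
Proof.
move=> hf hg.
have dfx : derivable f x 1 by apply: (@ex_derive _ _ _ _ _ _ _ hf).
have dgx : derivable g (f x) 1 by apply: (@ex_derive _ _ _ _ _ _ _ hg).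
apply: DeriveDef.
  apply/derivable1_diffP; apply: differentiable_comp; exact/derivable1_diffP.
rewrite -derive1E derive1_comp // !derive1E !derive_val //.
Qed.

Lemma ndecr_from_deriv (f df : R -> R) :
  (forall x : R, is_derive x 1 f (df x)) -> (forall x : R, 0 < x -> 0 <= df x) ->
  forall x, 0 <= x -> f 0 <= f x.
Proof.
move=> hd hpos x x0.
apply: (@ger0_derive1_ndecry R f 0).
- by move=> y _; apply: (@ex_derive _ _ _ _ _ _ _ (hd y)).
- move=> y; rewrite in_itv/= andbT => y0.
  by rewrite derive1E derive_val; apply: hpos.
- apply: derivable_within_continuous => y _; apply: (@ex_derive _ _ _ _ _ _ _ (hd y)).
- by [].
- exact: x0.
Qed.

Lemma k_ineq (w : R) : 0 <= w -> expR w * (2 - w) <= 2 + w.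
Proof.
move=> w0.
pose f := (fun x : R => 2 + x - expR x * (2 - x)).
have hd : forall x : R, is_derive x 1 f (1 - (expR x * (-1) + (2 - x) * expR x)).
  move=> x.
  have -> : f = (cst 2 + id) - expR * (cst 2 - id) by [].
  apply: is_derive_eq.
  by rewrite add0r sub0r.
have := @ndecr_from_deriv f _ hd _ w w0.
rewrite /f expR0 addr0 subr0 mul1r subrr subr_ge0; apply.
move=> x x0.
have := expR_ge1Dx (- x); rewrite expRN => hx.
have ex := expR_gt0 x.
have : expR x * (1 - x) <= 1.
  by have := ler_wpM2l (ltW ex) hx; rewrite mulfV ?gt_eqF // addrC.
nra.
Qed.

Lemma hoeff_alg (p x z : R) : 0 <= p <= 1 -> 0 <= x -> 1 <= z ->
  4 * (z - 1) <= x * (z + 1) ->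
  p * (z * z) <= (p + x / 4) * (1 - p + p * (z * z)).
Proof.
move=> /andP[p0 p1] x0 z1 hk.
set D := 1 - p + p * (z * z).
have D0 : 0 <= D by rewrite /D; nra.
have h1 : 0 <= (z - 1) * ((1 - p) - p * z) ^+ 2 by apply: mulr_ge0; [lra| exact: sqr_ge0].
have h2 : 0 <= D * (x * (z + 1) - 4 * (z - 1)) by apply: mulr_ge0 => //; lra.
have h3 : 0 <= (z + 1) * (x * D - 4 * (p * (1 - p) * (z * z - 1))).
  rewrite /D in h1 h2 *; nra.
have : 0 <= x * D - 4 * (p * (1 - p) * (z * z - 1)).
  by move: h3; rewrite pmulr_rge0 //; lra.
rewrite /D; nra.
Qed.

#[local] Existing Instance is_derive_chain.

Lemma hoeff_lemma (p h : R) : 0 <= p <= 1 -> 0 <= h ->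
  1 - p + p * expR h <= expR (p * h + h ^+ 2 / 8).
Proof.
move=> hp h0.
pose F := - ((cst (1 - p) + cst p * expR) * (expR \o (- (cst p * id + cst (8^-1) * id ^+ 2)))) : R -> R.
have hd : forall x : R, is_derive x 1 F
   (- ((1 - p + p * expR x) * (expR (- (p * x + 8^-1 * (x * x))) * - (p + 8^-1 * (2 * x)))
      + expR (- (p * x + 8^-1 * (x * x))) * (p * expR x))).
  move=> x; apply: is_derive_eq.
  rewrite /= !(scaler0, addr0, add0r, expr1) /GRing.scale /= !mulr1 expr2.
  by [].
have := @ndecr_from_deriv F _ hd _ h h0.
have HF : forall y, F y = - ((1 - p + p * expR y) * expR (- (p * y + 8^-1 * (y * y)))).
  by move=> y; rewrite /F /= /cst expr2.
rewrite !HF !mulr0 !addr0 oppr0 expR0 mulr1 expr2 subrK mulr1 => H.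
have : (1 - p + p * expR h) * expR (- (p * h + 8^-1 * (h * h))) <= 1.
  rewrite -lerN2; apply: H => x x0.
  set E := expR (- _).
  have E0 : 0 <= E by apply: ltW; apply: expR_gt0.
  have ex : expR x = expR (x / 2) * expR (x / 2) by rewrite -expRD -splitr.
  have z1 : 1 <= expR (x / 2).
    by apply: le_trans (expR_ge1Dx _); rewrite lerDl; apply: divr_ge0 => //; apply: ltW.
  have hk := k_ineq (x / 2) (divr_ge0 (ltW x0) (ler0n _ 2)).
  have hk' : 4 * (expR (x / 2) - 1) <= x * (expR (x / 2) + 1) by nra.
  have := @hoeff_alg p x (expR (x / 2)) hp (ltW x0) z1 hk'.
  rewrite -ex => ha.
  have -> : 8^-1 * (2 * x) = x / 4 by field.
  nra.
move=> H2. have -> : p * h + h * h / 8 = p * h + 8^-1 * (h * h) by rewrite [X in _ + X]mulrC.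
move: H2; rewrite expRN ler_pdivrMr ?mul1r //; exact: expR_gt0.
Qed.


Lemma chord (l c x : R) : 0 < c -> 0 <= x <= c ->
  expR (l * x) <= 1 + x / c * (expR (l * c) - 1).
Proof.
move=> c0 /andP[x0 xc].
have t0 : 0 <= x / c by apply: divr_ge0 => //; apply: ltW.
have t1 : x / c <= 1 by rewrite ler_pdivrMr // mul1r.
have := @convex_expR R (@Itv01 R (x / c) t0 t1) (l * c) 0.
rewrite !convRE /= expR0 mulr0 addr0.
have -> : x / c * (l * c) = l * x by field; apply: lt0r_neq0.
move=> H; apply: (le_trans H).
rewrite /unstable.onem mulr1; lra.
Qed.
End Ana.

Lemma sum_prod_dep (R : comNzRingType) (I : finType) (T_ : I -> finType) (F : forall i, T_ i -> R) :
  \sum_(w : {dffun forall i, T_ i}) \prod_i F i (w i) = \prod_i \sum_(t : T_ i) F i t.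
Proof.
rewrite (reindex (@dffun_of_fprod I T_)); last first.
  by apply: onW_bij; apply: dffun_of_fprod_bij.
have -> : \sum_(j : fprod T_) \prod_i F i (dffun_of_fprod j i) =
          \sum_(j : fprod T_) \prod_(i in I) [ffun t => F i t] (j i).
  by apply: eq_bigr => j _; apply: eq_bigr => i _; rewrite !ffunE.
rewrite (@big_fprod R 0 1 *%R +%R I T_ (fun i => [ffun t => F i t])).
under [RHS]eq_bigr => i _ do rewrite (big_tag (fun i t => F i t) i).
rewrite bigA_distr_big_dep.
apply: eq_bigr => g _; apply: eq_bigr => i _.
rewrite /untag; case: eqP => // e; by rewrite ffunE.
Qed.

Lemma sum_option (R : nmodType) (T : finType) (F : option T -> R) :
  \sum_(o : option T) F o = F None + \sum_(k : T) F (Some k).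
Proof.
rewrite (bigD1 None) //=; congr (_ + _).
rewrite (reindex_omap Some id); last by case.
by apply: eq_bigl => k /=; rewrite eqxx.
Qed.

Theorem lemma22 (R : realType) (S : substrate R) (Req : finType)
  (req : Req -> request S) (K : Req -> nat)
  (f : forall r, 'I_(K r) -> R) (m : forall r, 'I_(K r) -> mapping (req r))
  (t : sT S) (u : sV S) (eps : R) :
  wf_substrate S ->
  (forall r, wf_request (req r)) ->
  rounding_family req K f m ->
  u \in sVt S t ->
  0 < eps <= 1 ->
  (forall r, dmax (req r) u / sdV S t u <= eps) ->
  let Delta := \sum_(r : Req) (Amax (req r) t u / dmax (req r) u) ^+ 2 in
  let n := ((#|sV S| * #|sT S|)%N)%:R : R in
  let beta := 1 + eps * Num.sqrt (2 * Delta * ln n) in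
  Prob K f (fun w => beta * sdV S t u <= Aalloc m t u w) <= n ^- 4.
Proof.
move=> hS hreq hRF ut heps hdm; cbv zeta.
set Delta := \sum_(r : Req) (Amax (req r) t u / dmax (req r) u) ^+ 2.
set n := ((#|sV S| * #|sT S|)%N)%:R.
set beta := 1 + eps * Num.sqrt (2 * Delta * ln n).
case: hS => hdpos _. case: hRF => fpos [fvalid [fsum [fcap _]]]. case/andP: heps => eps0 eps1.
set d := sdV S t u.
have d0 : 0 < d := hdpos t u ut.
pose a r (o : option 'I_(K r)) : R :=
  match o with Some k => Anode (mV (m r k)) t u | None => 0 end.
pose c r := Amax (req r) t u.
pose mu r := \sum_(k < K r) f r k * Anode (mV (m r k)) t u.
pose C := \sum_r c r ^+ 2.
have hA : forall w, Aalloc m t u w = \sum_r a r (w r) by [].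
have sumsel : forall r, \sum_(o : option 'I_(K r)) sel_prob f o = 1.
  by move=> r; rewrite sum_option /= subrK.
have sel0 : forall r (o : option 'I_(K r)), 0 <= sel_prob f o.
  move=> r [k|] /=; [exact: ltW (fpos r k) | rewrite subr_ge0; exact: fsum].
have anode0 : forall r mv, 0 <= Anode (q:=req r) mv t u.
  move=> r mv; rewrite /Anode; apply: sumr_ge0 => i _; exact: (hreq r).1.
have anode_le : forall r k, Anode (mV (m r k)) t u <= c r.
  move=> r k; rewrite /c /Amax.
  apply: (@le_bigmax_cond _ _ _ 0 (mV (m r k)) _ (fun mv => Anode mv t u)).

  apply/asboolP; exists (mE (m r k)).
  by case: (m r k) (fvalid r k).
have c0 : forall r, 0 <= c r.
  move=> r; rewrite /c /Amax; exact: (@bigmax_ge_id _ _ _ _ 0 _ (fun mv => Anode mv t u)).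
have a0 : forall r o, 0 <= a r o <= c r.
  by move=> r [k|] /=; rewrite ?anode0 ?anode_le ?lexx ?c0.
have musel : forall r, \sum_(o : option 'I_(K r)) sel_prob f o * a r o = mu r.
  by move=> r; rewrite sum_option /= mulr0 add0r.
have mu0 : forall r, 0 <= mu r.
  move=> r; apply: sumr_ge0 => k _; apply: mulr_ge0; [exact: ltW | exact: anode0].
have muc : forall r, mu r <= c r.
  move=> r; apply: (@le_trans _ _ (\sum_(k < K r) f r k * c r)).
    by apply: ler_sum => k _; apply: ler_wpM2l; [exact: ltW | exact: anode_le].
  by rewrite -mulr_suml; apply: ler_piMl => //; exact: fsum.
have musum : \sum_r mu r <= d by exact: fcap.
have dm0 : forall r, 0 <= dmax (req r) u.
  move=> r; rewrite /dmax; exact: (@bigmax_ge_id _ _ _ _ 0 _ (fun i => rdV (req r) i)).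
have rdV_le : forall r i, u \in rVallow (req r) i -> rdV (req r) i <= dmax (req r) u.
  move=> r i hi; rewrite /dmax.
  exact: (@le_bigmax_cond _ _ _ 0 i (fun i => u \in rVallow (req r) i) (fun i => rdV (req r) i)).
have cdm : forall r, dmax (req r) u = 0 -> c r = 0.
  move=> r h; apply/eqP; rewrite eq_le c0 andbT /c /Amax.
  apply/bigmax_leP; split => // mv /asboolP [me [hv _]].
  rewrite /Anode; apply: sumr_le0 => i /andP[_ /eqP hi].
  rewrite -h; apply: rdV_le; rewrite -hi; exact: hv i.
have cbound : forall r, c r ^+ 2 <= (eps * d) ^+ 2 * (c r / dmax (req r) u) ^+ 2.
  move=> r; have [h|h] := eqVneq (dmax (req r) u) 0.
    by rewrite (cdm r h) mul0r expr0n /= mulr0.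
  have dp : 0 < dmax (req r) u by rewrite lt_def h dm0.
  have hle : dmax (req r) u <= eps * d by move: (hdm r); rewrite ler_pdivrMr.
  have -> : c r ^+ 2 = (c r / dmax (req r) u) ^+ 2 * dmax (req r) u ^+ 2.
    by rewrite -exprMn divfK // gt_eqF.
  have X0 := sqr_ge0 (c r / dmax (req r) u).
  set X := (c r / dmax (req r) u) ^+ 2 in X0 *.
  have dm00 := dm0 r.
  have : 0 <= (eps * d - dmax (req r) u) * (eps * d + dmax (req r) u) * X.
    apply: mulr_ge0 => //; apply: mulr_ge0; lra.
  nra.
have Csum : C <= (eps * d) ^+ 2 * Delta.
  rewrite /C /Delta mulr_sumr; apply: ler_sum => r _; exact: cbound.
have mgf : forall l, 0 <= l -> forall r,
    \sum_(o : option 'I_(K r)) sel_prob f o * expR (l * a r o)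
      <= expR (l * mu r + l ^+ 2 * c r ^+ 2 / 8).
  move=> l l0 r.
  have [cz|cp] := eqVneq (c r) 0.
    have az : forall o, a r o = 0.
      by move=> o; apply/eqP; rewrite eq_le; case/andP: (a0 r o) => -> ; rewrite cz => ->.
    have muz : mu r = 0 by apply/eqP; rewrite eq_le mu0 andbT -cz muc.
    under eq_bigr do rewrite az mulr0 expR0 mulr1.
    rewrite sumsel muz cz.
    have -> : l * 0 + l ^+ 2 * 0 ^+ 2 / 8 = 0 :> R by ring.
    by rewrite expR0.
  have cp' : 0 < c r by rewrite lt_def cp c0.
  set E := expR (l * c r).
  apply: (@le_trans _ _ (\sum_(o : option 'I_(K r)) sel_prob f o * (1 + a r o / c r * (E - 1)))).
    apply: ler_sum => o _; apply: ler_wpM2l; first exact: sel0.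
    exact: chord.
  have -> : \sum_(o : option 'I_(K r)) sel_prob f o * (1 + a r o / c r * (E - 1))
      = 1 - mu r / c r + mu r / c r * E.
    rewrite (eq_bigr (fun o => sel_prob f o + sel_prob f o * a r o * ((c r)^-1 * (E - 1)))); last first.
      by move=> o _; ring.
    by rewrite big_split /= -mulr_suml sumsel musel; ring.
  have p0 : 0 <= mu r / c r <= 1.
    by rewrite divr_ge0 ?mu0 ?c0 //= ler_pdivrMr // mul1r muc.
  have h0 : 0 <= l * c r by rewrite mulr_ge0.
  have := @hoeff_lemma R _ _ p0 h0.
  have -> : mu r / c r * (l * c r) + (l * c r) ^+ 2 / 8 = l * mu r + l ^+ 2 * c r ^+ 2 / 8.
    by field; rewrite gt_eqF.
  by [].
have weight0 : forall w : outcome K, 0 <= weight f w.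
  by move=> w; apply: prodr_ge0 => r _; exact: sel0.
have chain : forall l, 0 <= l ->
    Prob K f (fun w => beta * d <= Aalloc m t u w)
      <= expR (- (l * beta * d) + l * d + l ^+ 2 * C / 8).
  move=> l l0.
  rewrite /Prob.
  apply: (@le_trans _ _ (\sum_(w : outcome K) weight f w * expR (l * (Aalloc m t u w - beta * d)))).
    rewrite [X in X <= _]big_mkcond /=; apply: ler_sum => w _.
    case: ifP => hE.
      rewrite -[X in X <= _]mulr1; apply: ler_wpM2l; first exact: weight0.
      by rewrite -expR0 ler_expR; apply: mulr_ge0 => //; rewrite subr_ge0.
    by apply: mulr_ge0; [exact: weight0 | exact: expR_ge0].
  have eq1 : forall w : outcome K, weight f w * expR (l * (Aalloc m t u w - beta * d))
      = expR (- (l * beta * d)) * \prod_r (sel_prob f (w r) * expR (l * a r (w r))).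
    move=> w; rewrite big_split /= -expR_sum hA /weight.
    rewrite mulrBr mulr_sumr expRD mulrA.
    rewrite [X in _ = X]mulrC -mulrA.
    by rewrite mulrA !mulrA.
  rewrite (eq_bigr _ (fun w _ => eq1 w)) -mulr_sumr.
  have := @sum_prod_dep R Req (fun r => option 'I_(K r) : finType) (fun r (o : option 'I_(K r)) => sel_prob f o * expR (l * a r o)).
  rewrite /outcome => ->.
  apply: (@le_trans _ _ (expR (- (l * beta * d)) * \prod_r expR (l * mu r + l ^+ 2 * c r ^+ 2 / 8))).
    apply: ler_wpM2l; first exact: expR_ge0.
    apply: ler_prod => r _; apply/andP; split.
      by apply: sumr_ge0 => o _; apply: mulr_ge0; [exact: sel0 | exact: expR_ge0].
    exact: mgf.
  rewrite -expR_sum -expRD ler_expR big_split /= -mulr_sumr.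
  have -> : \sum_i l ^+ 2 * c i ^+ 2 / 8 = l ^+ 2 * C / 8 by rewrite /C mulr_sumr mulr_suml.
  by rewrite addrA lerD2r lerD2l; apply: ler_wpM2l.
have n1 : 1 <= n.
  rewrite /n ler1n muln_gt0; apply/andP; split; apply/card_gt0P; by [exists u | exists t].
have n0 : 0 < n by apply: lt_le_trans n1.
have lnn0 : 0 <= ln n := ln_ge0 n1.
have Delta0 : 0 <= Delta by apply: sumr_ge0 => r _; exact: sqr_ge0.
have arg0 : 0 <= 2 * Delta * ln n by apply: mulr_ge0 => //; apply: mulr_ge0.
have s0 : 0 <= eps * Num.sqrt (2 * Delta * ln n) by apply: mulr_ge0; [exact: ltW | exact: sqrtr_ge0].
have s2 : (eps * Num.sqrt (2 * Delta * ln n)) ^+ 2 = eps ^+ 2 * (2 * Delta * ln n).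
  by rewrite exprMn sqr_sqrtr.
have target : n ^- 4 = expR (- (ln n *+ 4)).
  by rewrite -lnXn // expRN lnK // posrE exprn_gt0.
have C0 : 0 <= C by apply: sumr_ge0 => r _; exact: sqr_ge0.
have bd0 : 0 < beta * d by apply: mulr_gt0 => //; rewrite /beta; lra.
have [Cz|Cp] := eqVneq C 0.
  have cz : forall r, c r = 0.
    move=> r; apply/eqP; rewrite -sqrf_eq0; apply/eqP.
    exact: (psumr_eq0P (fun r _ => sqr_ge0 (c r)) Cz).
  have Az : forall w, Aalloc m t u w = 0.
    move=> w; rewrite hA big1 // => r _.
    by have := a0 r (w r); rewrite cz => h; apply/eqP; rewrite eq_le andbC.
  rewrite /Prob big1; first by rewrite invr_ge0 exprn_ge0 // ltW.
  by move=> w; rewrite Az => h; exfalso; move: h; rewrite leNgt bd0.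
have Cpos : 0 < C by rewrite lt_def Cp C0.
set s := eps * Num.sqrt (2 * Delta * ln n) in s0 s2.
pose l := 4 * s * d / C.
have l0 : 0 <= l by rewrite /l; apply: divr_ge0 (ltW Cpos); apply: mulr_ge0 (ltW d0); apply: mulr_ge0 s0.
apply: le_trans (chain l l0) _.
rewrite target ler_expR.
have key : 2 * ln n * C <= s ^+ 2 * d ^+ 2.
  apply: (@le_trans _ _ (2 * ln n * ((eps * d) ^+ 2 * Delta))).
    by apply: ler_wpM2l => //; apply: mulr_ge0.
  rewrite s2 le_eqVlt; apply/orP; left; apply/eqP; ring.
have -> : - (l * beta * d) + l * d + l ^+ 2 * C / 8 = - (2 * s ^+ 2 * d ^+ 2 / C).
  by rewrite /l /beta -/s; field; rewrite gt_eqF.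
rewrite lerN2 ler_pdivlMr // -mulr_natr.
nra.
Qed.
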